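(* A commutative loop $Q$ of finite order $n$ has a subloop of even order if and only if $n$ is even.
   Context: A loop is a set $Q$ with a binary operation (juxtaposition) and neutral element $e$ such that for all $a,b$ the equations $ax=b$, $ya=b$ have unique solutions. A subloop is a subset containing $e$ which is itself a loop under the restricted operation. *)

(* Defs.v *)
From mathcomp Require Import all_boot.
Set Implicit Arguments. Unset Strict Implicit. Unset Printing Implicit Defensive.

Definition is_loop (T : Type) (op : T -> T -> T) (e : T) : Prop :=
  (forall x, op e x = x /\ op x e = x) /\
  (forall a b, exists! x, op a x = b) /\
  (forall a b, exists! y, op y a = b).

Definition is_commutative (T : Type) (op : T -> T -> T) : Prop :=
  forall x y, op x y = op y x.

Definition is_subloop (T : finType) (op : T -> T -> T) (e : T) (S : {set T}) : Prop :=
  e \in S /\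
  (forall a b, a \in S -> b \in S -> op a b \in S) /\
  (forall a b, a \in S -> b \in S ->
     exists x, (x \in S /\ op a x = b) /\ forall x', x' \in S -> op a x' = b -> x' = x) /\
  (forall a b, a \in S -> b \in S ->
     exists y, (y \in S /\ op y a = b) /\ forall y', y' \in S -> op y' a = b -> y' = y).

(* Main.v *)
Require Import Defs.
From mathcomp Require Import all_boot.

Section Aux.
Variables (T : finType) (op : T -> T -> T).
Hypothesis opC : forall x y, op x y = op y x.

Lemma parity_sq (A : {set T}) (b : T) :
  (forall a, a \in A -> exists x, (x \in A /\ op a x = b) /\
      forall x', x' \in A -> op a x' = b -> x' = x) ->
  odd #|[set x in A | op x x == b]| = odd #|A|.
Proof.
move=> Hu.
pose P := [set p : T * T | [&& p.1 \in A, p.2 \in A & op p.1 p.2 == b]].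
have cP : #|P| = #|A|.
  have -> : A = fst @: P.
    apply/setP=> a; apply/idP/imsetP.
      move=> aA; have [x [[xA ex] _]] := Hu a aA.
      by exists (a, x) => //; rewrite inE /= aA xA ex eqxx.
    by case=> [[x y]]; rewrite inE /= => /and3P [xA _ _] ->.
  apply/esym/card_in_imset => [[x1 y1] [x2 y2]]; rewrite !inE /=.
  move=> /and3P [x1A y1A /eqP e1] /and3P [x2A y2A /eqP e2] /= ex; subst x2.
  have [z [_ Hz]] := Hu x1 x1A.
  by rewrite (Hz _ y1A e1) (Hz _ y2A e2).
pose D := [set p in P | p.1 == p.2].
have cD : #|D| = #|[set x in A | op x x == b]|.
  have -> : D = (fun x => (x, x)) @: [set x in A | op x x == b].
    apply/setP=> [[x y]]; rewrite !inE /=; apply/idP/imsetP.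
      move=> /andP [/and3P [xA yA ex] /eqP exy]; subst y.
      by exists x => //; rewrite inE xA ex.
    by case=> z; rewrite inE => /andP [zA ez] [-> ->]; rewrite eqxx zA ez.
  by apply: card_imset => x y [].
pose r (x : T) := enum_rank x.
pose O1 := [set p in P | (r p.1 < r p.2)%N].
pose O2 := [set p in P | (r p.2 < r p.1)%N].
have cO : #|P :\: D| = #|O1| + #|O2|.
  rewrite -(cardsID O1 (P :\: D)); congr (_ + _); apply: eq_card => [[x y]];
  rewrite !inE /=; case: [&& x \in A, y \in A & op x y == b] => //=.
    by case: (x =P y) => [<-|_] /=; rewrite ?ltnn.
  case: (x =P y) => [<-|nxy] /=; first by rewrite ltnn.
  rewrite -leqNgt leq_eqVlt; case: ltngtP => //= H.
  by exfalso; apply: nxy; apply: enum_rank_inj; apply: val_inj.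
have cO2 : #|O2| = #|O1|.
  have -> : O2 = (fun p : T * T => (p.2, p.1)) @: O1.
    apply/setP=> [[x y]]; rewrite !inE /=; apply/idP/imsetP.
      move=> /andP [/and3P [xA yA exy] lt]; exists (y, x) => //.
      by rewrite !inE /= xA yA opC exy lt.
    case=> [[u v]]; rewrite !inE /= => /andP [/and3P [uA vA e] lt] [-> ->].
    by rewrite uA vA opC e lt.
  by apply: card_imset => [[? ?] [? ?]] [-> ->].
rewrite -cD -cP -(cardsID D P) (_ : P :&: D = D); last first.
  by apply/setIidPr/subsetP=> p; rewrite inE => /andP [].
by rewrite oddD cO cO2 addnn odd_double addbF.
Qed.
End Aux.

Theorem corollary3p2 (T : finType) (op : T -> T -> T) (e : T) :
  is_loop op e -> is_commutative op ->
  ((exists S : {set T}, is_subloop op e S /\ ~~ odd #|S|) <-> ~~ odd #|T|).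
Proof.
move=> [He [Hr Hl]] opC; split; last first.
  move=> ev; exists setT; split; last by rewrite cardsT.
  split; first by rewrite inE.
  split; first by move=> *; rewrite inE.
  split.
    move=> a b _ _; have [x [ex Hx]] := Hr a b.
    by exists x; split; [rewrite inE|move=> x' _ /Hx].
  move=> a b _ _; have [x [ex Hx]] := Hl a b.
  by exists x; split; [rewrite inE|move=> x' _ /Hx].
move=> [S [[eS [_ [HS _]]] evS]].
apply/negP=> oddT.
have sqsurj : forall b, exists x, op x x = b.
  move=> b.
  have := @parity_sq T op opC setT b.
  rewrite cardsT oddT; case/(_ _)/Wrap.
  - move=> a _; have [x [ex Hx]] := Hr a b.
    by exists x; split; [rewrite inE|move=> x' _ /Hx].
  - move=> H; have : (0 < #|[set x in [set: T] | op x x == b]|)%N.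
      by case: #|_| H.
    by case/card_gt0P=> x; rewrite !inE => /eqP ?; exists x.
have sqinj : injective (fun x => op x x).
  have H : {in T &, injective (fun x => op x x)}.
    apply/(@image_injP T T (fun x => op x x) T).
    rewrite eqn_leq; apply/andP; split.
      by apply: leq_trans (card_size _) _; rewrite size_map -cardE.
    apply: subset_leq_card; apply/subsetP=> y _.
    by have [x <-] := sqsurj y; apply: image_f.
  by move=> x y; apply: H.
have := @parity_sq T op opC S e.
rewrite (negbTE evS); case/(_ _)/Wrap; first by move=> a aS; apply: HS.
set E := [set x in S | _] => oE.
have eE : e \in E by rewrite inE eS; have [-> _] := He e; rewrite eqxx.
have : (0 < #|E :\ e|)%N.
  move: oE; rewrite (cardsD1 e E) eE /=.
  by case: #|_|.
case/card_gt0P=> s; rewrite !inE => /and3P [nse _ /eqP ss].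
move/negP: nse; apply; apply/eqP; apply: sqinj => /=.
by rewrite ss; have [-> _] := He e.
Qed.
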